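(* Let $\mathcal{U}$ be a finite-dimensional real Hilbert space, let $\mathcal{W}$ be a real Hilbert space, let $\phi:\mathcal{U}\to\mathcal{B}(\mathcal{U},\mathcal{W})$ be a map, and let $(u_i,y_i)\in\mathcal{U}\times\mathcal{U}$, $i=1,\dots,n$, be given data. For $Q\in\mathcal{B}(\mathcal{W})$ define $$L(Q)=\sum_{i=1}^n \big\|\phi(u_i)^*Q\,\phi(u_i)u_i-y_i\big\|_{\mathcal{U}}^2 .$$ Let $\hat{\mathcal{W}}=\sum_{i=1}^n \operatorname{im}\phi(u_i)\subset\mathcal{W}$ and let $\Pi\in\mathcal{B}(\mathcal{W})$ be the orthogonal projection onto $\hat{\mathcal{W}}$. Then: (1) $L(\Pi Q\Pi)=L(Q)$ for all $Q\in\mathcal{B}(\mathcal{W})$; (2) $\|\Pi Q\Pi\|\le\|Q\|$ for all $Q\in\mathcal{B}(\mathcal{W})$, where $\|\cdot\|$ is the operator norm; (3) $\Pi Q\Pi\in\mathcal{B}^+(\mathcal{W})$ for all $Q\in\mathcal{B}^+(\mathcal{W})$.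
   Context: $\mathcal{B}(\mathcal{U},\mathcal{W})$ denotes the bounded linear operators from $\mathcal{U}$ to $\mathcal{W}$, $\mathcal{B}(\mathcal{W})=\mathcal{B}(\mathcal{W},\mathcal{W})$, and $B^*$ is the adjoint of $B$. An operator $G$ on a Hilbert space $\mathcal{H}$ is called nonnegative if $\langle Gu,u\rangle_{\mathcal{H}}\ge 0$ for all $u\in\mathcal{H}$ (self-adjointness is not required), and $\mathcal{B}^+(\mathcal{H})$ denotes the set of nonnegative operators in $\mathcal{B}(\mathcal{H})$. *)

(* Defs.v *)
From HB Require Import structures.
From mathcomp Require Import all_boot all_order all_algebra.
From mathcomp Require Import all_classical all_reals all_analysis.
Set Implicit Arguments. Unset Strict Implicit. Unset Printing Implicit Defensive.
Import Order.TTheory GRing.Theory Num.Theory.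
Import numFieldNormedType.Exports.
Local Open Scope classical_set_scope.
Local Open Scope ring_scope.

(* A real Hilbert space is a complete normed R-module V together with an inner
   product ip whose induced norm is the norm of V. *)
Definition is_inner_product (R : realType) (V : normedModType R)
  (ip : V -> V -> R) : Prop :=
  [/\ (forall x y, ip x y = ip y x),
      (forall (a : R) x y z, ip (a *: x + y) z = a * ip x z + ip y z),
      (forall x, 0 <= ip x x) &
      (forall x, `|x| = Num.sqrt (ip x x))].

Definition finite_dim (R : realType) (V : normedModType R) : Prop :=
  exists (m : nat) (e : 'I_m -> V),
    forall v, exists c : 'I_m -> R, v = \sum_(j < m) c j *: e j.

Definition is_linear_op (R : realType) (V W : normedModType R) (f : V -> W) :=
  forall (a : R) x y, f (a *: x + y) = a *: f x + f y.

Definition is_bounded_op (R : realType) (V W : normedModType R) (f : V -> W) :=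
  exists M : R, forall x, `|f x| <= M * `|x|.

Definition is_bounded_linear (R : realType) (V W : normedModType R) (f : V -> W) :=
  is_linear_op f /\ is_bounded_op f.

Definition is_adjoint (R : realType) (V W : normedModType R)
  (ipV : V -> V -> R) (ipW : W -> W -> R) (A : V -> W) (Astar : W -> V) :=
  forall w v, ipV (Astar w) v = ipW w (A v).

Definition is_orth_proj (R : realType) (W : normedModType R)
  (ipW : W -> W -> R) (S : set W) (P : W -> W) :=
  forall w, S (P w) /\ (forall s, S s -> ipW (w - P w) s = 0).

Definition opnorm (R : realType) (V W : normedModType R) (f : V -> W) : R :=
  sup [set `|f x| | x in [set x : V | `|x| <= 1]].

(* nonnegative operator (self-adjointness not required) *)
Definition nonneg_op (R : realType) (W : normedModType R)
  (ipW : W -> W -> R) (G : W -> W) := forall w, 0 <= ipW (G w) w.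

Definition sum_images (R : realType) (U W : normedModType R) (n : nat)
  (phi : U -> U -> W) (u : 'I_n -> U) : set W :=
  [set w | exists x : 'I_n -> U, w = \sum_(i < n) phi (u i) (x i)].

Definition loss (R : realType) (U W : normedModType R) (n : nat)
  (phi : U -> U -> W) (phistar : U -> W -> U) (u y : 'I_n -> U)
  (Q : W -> W) : R :=
  \sum_(i < n) `|phistar (u i) (Q (phi (u i) (u i))) - y i| ^+ 2.

(* Main.v *)
Require Import Defs.
From HB Require Import structures.
From mathcomp Require Import all_boot all_order all_algebra.
From mathcomp Require Import all_classical all_reals all_analysis.
Import Order.TTheory GRing.Theory Num.Theory.
Import numFieldNormedType.Exports.
Local Open Scope classical_set_scope.
Local Open Scope ring_scope.

Section IP.
Variables (R : realType) (V : normedModType R) (ip : V -> V -> R).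
Hypothesis hip : is_inner_product ip.

Lemma ip_sym x y : ip x y = ip y x.
Proof. by case: hip. Qed.

Lemma ip_lin a x y z : ip (a *: x + y) z = a * ip x z + ip y z.
Proof. by case: hip. Qed.

Lemma ip0l z : ip 0 z = 0.
Proof.
have := ip_lin (-1) 0 0 z; rewrite scaler0 addr0 mulN1r => h.
by rewrite {1}h addNr.
Qed.

Lemma ipDl x y z : ip (x + y) z = ip x z + ip y z.
Proof. by rewrite -{1}(scale1r x) ip_lin mul1r. Qed.

Lemma ipBl x y z : ip (x - y) z = ip x z - ip y z.
Proof. by rewrite addrC -scaleN1r ip_lin mulN1r addrC. Qed.

Lemma ip_norm2 x : `|x| ^+ 2 = ip x x.
Proof. case: hip => _ _ h0 ->; by rewrite sqr_sqrtr. Qed.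

Lemma ip_eq0 x : ip x x = 0 -> x = 0.
Proof. move=> h; apply/normr0_eq0; case: hip => _ _ _ ->; by rewrite h sqrtr0. Qed.

Lemma ip_ge0 x : 0 <= ip x x.
Proof. by case: hip. Qed.
End IP.
Arguments ip_sym {R V ip}.
Arguments ip_lin {R V ip}.
Arguments ip0l {R V ip}.
Arguments ipDl {R V ip}.
Arguments ipBl {R V ip}.
Arguments ip_norm2 {R V ip}.
Arguments ip_eq0 {R V ip}.
Arguments ip_ge0 {R V ip}.

Lemma lin_sub (R : realType) (V W : normedModType R) (f : V -> W) :
  is_linear_op f -> forall x y, f (x - y) = f x - f y.
Proof.
move=> hf x y; rewrite addrC -scaleN1r hf scaleN1r addrC //.
Qed.

Lemma lin_zero (R : realType) (V W : normedModType R) (f : V -> W) :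
  is_linear_op f -> f 0 = 0.
Proof. by move=> hf; rewrite -(subrr 0) lin_sub // subrr. Qed.

Theorem lemma1 (R : realType) (U W : completeNormedModType R)
  (ipU : U -> U -> R) (ipW : W -> W -> R)
  (hipU : is_inner_product ipU) (hipW : is_inner_product ipW)
  (hUfin : finite_dim U)
  (phi : U -> U -> W)
  (hphi : forall v, is_bounded_linear (phi v))
  (phistar : U -> W -> U)
  (hphistar : forall v, is_adjoint ipU ipW (phi v) (phistar v))
  (n : nat) (u y : 'I_n -> U)
  (Pi : W -> W)
  (hPi : is_orth_proj ipW (sum_images phi u) Pi) :
  (forall Q : W -> W, is_bounded_linear Q ->
     loss phi phistar u y (Pi \o Q \o Pi) = loss phi phistar u y Q) /\
  (forall Q : W -> W, is_bounded_linear Q ->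
     opnorm (Pi \o Q \o Pi) <= opnorm Q) /\
  (forall Q : W -> W, is_bounded_linear Q -> nonneg_op ipW Q ->
     nonneg_op ipW (Pi \o Q \o Pi)).
Proof.
set S := sum_images phi u.
have Ssub : forall s t, S s -> S t -> S (s - t).
  move=> s t [x ->] [x' ->]; exists (fun i => x i - x' i).
  rewrite -sumrB; apply: eq_bigr => i _; rewrite lin_sub //; by case: (hphi (u i)).
have Sphi : forall i v, S (phi (u i) v).
  move=> i v; exists (fun j => if j == i then v else 0).
  rewrite (bigD1 i) //= eqxx big1 ?addr0 // => j /negbTE ->.
  by rewrite lin_zero //; case: (hphi (u j)).
have PiS : forall s, S s -> Pi s = s.
  move=> s Ss; have [h1 h2] := hPi s.
  have := h2 _ (Ssub _ _ Ss h1) => /(ip_eq0 hipW) /eqP; rewrite subr_eq0 => /eqP.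
  by [].
have Piip : forall w t, S t -> ipW (Pi w) t = ipW w t.
  move=> w t St; have [_ h2] := hPi w; have := h2 _ St.
  by rewrite (ipBl hipW) => /eqP; rewrite subr_eq0 => /eqP ->.
have Pisa : forall a b, ipW (Pi a) b = ipW a (Pi b).
  move=> a b.
  rewrite (ip_sym hipW (Pi a)) -(Piip b (Pi a)); last by case: (hPi a).
  rewrite (ip_sym hipW) Piip //; by case: (hPi b).
split.
  move=> Q hQ; rewrite /loss; apply: eq_bigr => i _ /=.
  rewrite [Pi (phi _ _)]PiS //.
  suff -> : phistar (u i) (Pi (Q (phi (u i) (u i)))) = phistar (u i) (Q (phi (u i) (u i))) by [].
  set w := Q _.
  apply/eqP; rewrite -subr_eq0; apply/eqP; apply: (ip_eq0 hipU).
  set d := _ - _.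
  rewrite {1}/d (ipBl hipU) !hphistar Piip //.
  by rewrite subrr.
have Pinorm : forall w, `|Pi w| <= `|w|.
  move=> w.
  rewrite -(@ler_pXn2r _ 2) ?normr_ge0 ?nnegrE ?normr_ge0 //.
  rewrite !(ip_norm2 hipW).
  have -> : ipW w w = ipW (Pi w) (Pi w) + ipW (w - Pi w) (w - Pi w).
    have [h1 h2] := hPi w.
    have e1 := h2 _ h1.
    move: e1; set p := Pi w; set d := w - p => e1.
    have ew : w = p + d by rewrite /d addrC subrK.
    clearbody d p; rewrite ew.
    rewrite !(ipDl hipW) (ip_sym hipW p (p + d)) (ip_sym hipW d (p + d)) !(ipDl hipW).
    by rewrite e1 (ip_sym hipW p d) e1 addr0 add0r.
  by rewrite lerDl (ip_ge0 hipW).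
split.
  move=> Q [hQl [M hM]]; rewrite /opnorm.
  apply: ge_sup; first by exists `|(Pi \o Q \o Pi) 0|; exists 0 => //=; rewrite normr0.
  move=> _ [x /= hx <-].
  apply: (le_trans (Pinorm _)).
  apply: ub_le_sup.
    exists `|M| => _ [z /= hz <-].
    apply: (le_trans (hM z)); apply: (le_trans (ler_norm _)).
    rewrite normrM ler_piMr // ?normr_ge0 // normr_id //.
  exists (Pi x) => //=; exact: le_trans (Pinorm x) hx.
move=> Q hQ hnn w /=.
by rewrite Pisa.
Qed.
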